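(* Let $\epsilon>0$ be a constant and let the input graph have $n$ vertices. In any call to ContractLayer, within each outer round there are at most $O(\log n)$ inner rounds, with high probability.
   Context: Setting: an undirected graph $G=(V,E,w)$ with $n$ vertices and positive edge weights. A partition of $V$ into clusters is maintained (initially singletons), together with the cluster graph $H$ whose vertices are the clusters, with an edge between clusters $X\neq Y$ iff $G$ has an edge between them, of average-linkage weight $\mathcal{W}(X,Y)=\sum_{(x,y)\in E,\,x\in X,\,y\in Y} w(x,y)/(|X||Y|)$. The size $|X|$ of a vertex of $H$ is the size of its cluster; merging means replacing two clusters by their union. ContractLayer$(H,T_L,\epsilon)$: while the maximum edge weight of $H$ is at least $T_L$, perform an outer round: color each non-isolated vertex of $H$ red or blue independently with probability $1/2$ each; let $G_c$ consist of the edges of $H$ of weight $\ge T_L$ joining a blue vertex $x$ to a red vertex $y$ with $|y|\ge|x|$. While $G_c$ has edges, perform an inner round: each blue vertex $b$ picks an independent uniform priority $\pi_b\in[0,1]$ and a uniformly random red neighbor $C_b$ in $G_c$ (blue vertices with no red neighbor in $G_c$ do nothing); for each red $r$, order the blue vertices proposing to $r$ by priority and select the shortest prefix whose total cluster size exceeds $\epsilon|r|$ (all of them if no prefix does); merge every selected blue vertex into its red vertex, updating all edge weights of $H$ and $G_c$ exactly; then remove from $G_c$ every edge with two red endpoints or weight below $T_L$, and remove from $G_c$ every red vertex whose cluster size has grown by more than a factor $(1+\epsilon)$ since the start of the outer round. ''With high probability'' means: for every constant $k$, the bound holds (with constant depending on $k$) with probability at least $1-n^{-k}$. *)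

(* Defs.v *)
(* A finite (discrete) probability model of one outer round
   of ContractLayer. *)
From HB Require Import structures.
From mathcomp Require Import all_boot all_order all_algebra.
Set Implicit Arguments. Unset Strict Implicit. Unset Printing Implicit Defensive.
Import Order.TTheory GRing.Theory Num.Theory.
Local Open Scope ring_scope.

Section Dist.
Variable R : realFieldType.

Definition dist (T : Type) := seq (R * T).
Definition dret T (x : T) : dist T := [:: (1, x)].
Definition dbind T U (d : dist T) (f : T -> dist U) : dist U :=
  flatten [seq [seq (p.1 * q.1, q.2) | q <- f p.2] | p <- d].
Definition duniform T (s : seq T) : dist T :=
  [seq ((size s)%:R^-1, x) | x <- s].
Definition dprob T (d : dist T) (A : pred T) : R :=
  \sum_(p <- d | A p.2) p.1.

(* independent fair coins: each element of s is kept (colored red) with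
   probability 1/2; returns the list of kept elements *)
Fixpoint coins T (s : seq T) : dist (seq T) :=
  match s with
  | [::] => dret [::]
  | x :: s' => dbind (duniform [:: true; false]) (fun b =>
               dbind (coins s') (fun t => dret (if b then x :: t else t)))
  end.

Fixpoint choices B C (s : seq B) (nb : B -> seq C) : dist (seq (B * C)) :=
  match s with
  | [::] => dret [::]
  | b :: s' => dbind (duniform (nb b)) (fun c =>
               dbind (choices s' nb) (fun t => dret ((b, c) :: t)))
  end.
End Dist.

Section ContractLayer.
Variable R : realFieldType.
Variable n : nat.
Variable e : rel 'I_n.
Variable w : 'I_n -> 'I_n -> R.

Notation cluster := {set 'I_n}.

Definition Wt (X Y : cluster) : R :=
  (\sum_(x in X) \sum_(y in Y | e x y) w x y) / (#|X| * #|Y|)%:R.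

Definition Hedge (X Y : cluster) : bool := [exists x in X, exists y in Y, e x y].

Definition nonisolated (P : {set cluster}) (X : cluster) : bool :=
  [exists Y in P, (Y != X) && Hedge X Y].

Variable eps : R.
Variable TL : R.

Definition csize (s : seq cluster) : nat := \sum_(b <- s) #|b|.

(* the shortest prefix of s (s ordered by priority) whose total size exceeds
   eps * |r|, or all of s if no prefix does *)
Definition select_prefix (r : cluster) (s : seq cluster) : seq cluster :=
  let j := find (fun i => eps * (#|r|)%:R < (csize (take i.+1 s))%:R)
                (iota 0 (size s)) in
  take j.+1 s.

(* size at the start of the outer round of the current red cluster X:
   X contains exactly one red cluster of the start of the outer round *)
Definition start_size (red0 : {set cluster}) (X : cluster) : nat :=
  \sum_(Y in red0 | Y \subset X) #|Y|.

(* state inside an outer round: the current partition P (vertices of H) and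
   the edge set Ec of G_c, stored as pairs (blue endpoint, red endpoint) *)
Definition state := ({set cluster} * {set cluster * cluster})%type.

Definition inner_step (red0 : {set cluster}) (st : state) : dist R state :=
  let P := st.1 in
  let Ec := st.2 in
  let props := enum [set b : cluster | [exists r : cluster, (b, r) \in Ec]] in
  let nbrs (b : cluster) := enum [set r : cluster | (b, r) \in Ec] in
  dbind (choices R props nbrs) (fun ch =>
  dbind (duniform R (permutations props)) (fun pi => (* priority order (pi_b) *)
  let sel (r : cluster) := select_prefix r [seq b <- pi | (b, r) \in ch] in
  let merged (b : cluster) := [exists r : cluster, b \in sel r] in
  let newcl (r : cluster) := r :|: \bigcup_(b <- sel r) b in
  let P' := [set newcl X | X in P & ~~ merged X] in
  let Ec1 := [set (p.1, newcl p.2) | p in Ec & ~~ merged p.1] in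
  let Ec' := [set q in Ec1 | (TL <= Wt q.1 q.2)
                & ((#|q.2|)%:R <= (1 + eps) * (start_size red0 q.2)%:R)] in
  dret R (P', Ec'))).

(* the inner loop: "while G_c has edges, perform an inner round";
   returns Some (number of inner rounds performed), or None if the fuel is
   exhausted (which cannot happen for fuel > #|P|; None counts as failure). *)
Fixpoint inner_loop (red0 : {set cluster}) (fuel : nat) (st : state)
  : dist R (option nat) :=
  if st.2 == set0 then dret R (Some 0%N) else
  match fuel with
  | 0 => dret R None
  | fuel'.+1 => dbind (inner_step red0 st) (fun st' =>
                dbind (inner_loop red0 fuel' st') (fun o =>
                dret R (omap S o)))
  end.

Definition outer_round (P0 : {set cluster}) : dist R (option nat) :=
  dbind (coins R (enum [set X in P0 | nonisolated P0 X])) (fun t =>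
  let red0 := [set X : cluster | X \in t] in
  let blue0 := [set X in P0 | nonisolated P0 X & X \notin t] in
  let Ec0 := [set p : cluster * cluster | [&& p.1 \in blue0, p.2 \in red0,
                 Hedge p.1 p.2, TL <= Wt p.1 p.2 & (#|p.1| <= #|p.2|)%N]] in
  inner_loop red0 n.+1 (P0, Ec0)).

End ContractLayer.

(* Main.v *)
Require Import Defs.
From HB Require Import structures.
From mathcomp Require Import all_boot all_order all_algebra.
From mathcomp Require Import ring lra zify.
Set Implicit Arguments. Unset Strict Implicit. Unset Printing Implicit Defensive.
Import Order.TTheory GRing.Theory Num.Theory.
Local Open Scope ring_scope.


Section DistLemmas.
Variable R : realFieldType.

Definition dE T (d : dist R T) (f : T -> R) : R := \sum_(p <- d) p.1 * f p.2.

Fixpoint dall T (P : T -> Prop) (d : dist R T) : Prop :=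
  match d with [::] => True | p :: d' => P p.2 /\ dall P d' end.

Fixpoint dpos T (d : dist R T) : Prop :=
  match d with [::] => True | p :: d' => 0 <= p.1 /\ dpos d' end.

Lemma dE_cons T p (d : dist R T) f : dE (p :: d) f = p.1 * f p.2 + dE d f.
Proof. by rewrite /dE big_cons. Qed.

Lemma dE_nil T f : dE (@nil (R * T)) f = 0.
Proof. by rewrite /dE big_nil. Qed.

Lemma dE_cat T (d1 d2 : dist R T) f : dE (d1 ++ d2) f = dE d1 f + dE d2 f.
Proof. by rewrite /dE big_cat. Qed.

Lemma dE_ret T (x : T) f : dE (dret R x) f = f x.
Proof. by rewrite /dE /dret big_cons big_nil mul1r addr0. Qed.

Lemma dE_bind T U (d : dist R T) (g : T -> dist R U) f :
  dE (dbind d g) f = dE d (fun x => dE (g x) f).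
Proof.
elim: d => [|p d IH]; first by rewrite /dbind /= dE_nil dE_nil.
rewrite /dbind /= dE_cat -/(dbind d g) IH dE_cons; congr (_ + _).
rewrite /dE big_map big_distrr /=; apply: eq_bigr => q _; by rewrite mulrA.
Qed.

Lemma dE_uniform T (s : seq T) f :
  dE (duniform R s) f = (size s)%:R^-1 * \sum_(x <- s) f x.
Proof. by rewrite /dE /duniform big_map big_distrr. Qed.

Lemma dE_ext T (d : dist R T) f g : dall (fun x => f x = g x) d -> dE d f = dE d g.
Proof.
elim: d => [|p d IH] /=; first by rewrite !dE_nil.
by move=> [H1 H2]; rewrite !dE_cons H1 IH.
Qed.

Lemma dE_le T (d : dist R T) f g : dpos d -> dall (fun x => f x <= g x) d ->
  dE d f <= dE d g.
Proof.
elim: d => [|p d IH] /=; first by rewrite !dE_nil.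
move=> [P1 P2] [H1 H2]; rewrite !dE_cons lerD //; last exact: IH.
by rewrite ler_wpM2l.
Qed.

Lemma dall_impl T (P Q : T -> Prop) d : (forall x, P x -> Q x) -> dall P d -> dall Q d.
Proof. move=> H; elim: d => [|p d IH] //= [H1 H2]; split; auto. Qed.

Lemma dall_T T (P : T -> Prop) d : (forall x, P x) -> dall P d.
Proof. move=> H; elim: d => [|p d IH] //=. Qed.

Lemma dall_and T (P Q : T -> Prop) d : dall P d -> dall Q d -> dall (fun x => P x /\ Q x) d.
Proof. elim: d => [|p d IH] //= [H1 H2] [H3 H4]; split; auto. Qed.

Lemma dall_cat T (P : T -> Prop) d1 d2 : dall P d1 -> dall P d2 -> dall P (d1 ++ d2).
Proof. elim: d1 => [|p d IH] //= [H1 H2] H3; split; auto. Qed.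

Lemma dpos_cat T (d1 d2 : dist R T) : dpos d1 -> dpos d2 -> dpos (d1 ++ d2).
Proof. elim: d1 => [|p d IH] //= [H1 H2] H3; split; auto. Qed.

Lemma dall_ret T (P : T -> Prop) x : P x -> dall P (dret R x).
Proof. by []. Qed.

Lemma dpos_ret T (x : T) : dpos (dret R x).
Proof. by rewrite /= ler01. Qed.

Lemma dall_bind T U (P : U -> Prop) (d : dist R T) (g : T -> dist R U) :
  dall (fun x => dall P (g x)) d -> dall P (dbind d g).
Proof.
elim: d => [|p d IH] //= [H1 H2]; apply: dall_cat; last exact: IH.
move: H1; elim: (g p.2) => [|q s IHs] //= [H3 H4]; split; auto.
Qed.

Lemma dpos_bind T U (d : dist R T) (g : T -> dist R U) :
  dpos d -> dall (fun x => dpos (g x)) d -> dpos (dbind d g).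
Proof.
elim: d => [|p d IH] //= [H0 H0'] [H1 H2]; apply: dpos_cat; last exact: IH.
move: H1; elim: (g p.2) => [|q s IHs] //= [H3 H4]; split; auto.
exact: mulr_ge0.
Qed.

Lemma dall_uniform (T : eqType) (P : T -> Prop) (s : seq T) :
  (forall x, x \in s -> P x) -> dall P (duniform R s).
Proof.
rewrite /duniform; move: ((size s)%:R^-1) => c.
elim: s => [|x s IH] //= H; split.
  by apply: H; rewrite mem_head.
by apply: IH => y Hy; apply: H; rewrite in_cons Hy orbT.
Qed.

Lemma dpos_uniform T (s : seq T) : dpos (duniform R s).
Proof.
rewrite /duniform; have : 0 <= (size s)%:R^-1 :> R by rewrite invr_ge0 ler0n.
move: ((size s)%:R^-1) => c.
by elim: s => [|x s IH] //= Hk; split => //; apply: IH.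
Qed.

Lemma dmass_uniform T (s : seq T) : (0 < size s)%N -> dE (duniform R s) (fun _ => 1) = 1.
Proof.
move=> Hs; rewrite dE_uniform big_const_seq iter_addr_0 -mulr_natr mul1r mulVf //.
by rewrite pnatr_eq0 -lt0n.
Qed.


Lemma dE_add T (d : dist R T) f g : dE d (fun x => f x + g x) = dE d f + dE d g.
Proof. by rewrite /dE -big_split /=; apply: eq_bigr => p _; rewrite mulrDr. Qed.

Lemma dE_scale T (d : dist R T) c f : dE d (fun x => c * f x) = c * dE d f.
Proof. by rewrite /dE big_distrr /=; apply: eq_bigr => p _; rewrite mulrCA. Qed.

Lemma dE_opp T (d : dist R T) f : dE d (fun x => - f x) = - dE d f.
Proof. by rewrite /dE -sumrN; apply: eq_bigr => p _; rewrite mulrN. Qed.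

Lemma dE_sum T (I : Type) (s : seq I) (d : dist R T) (F : I -> T -> R) :
  dE d (fun x => \sum_(i <- s) F i x) = \sum_(i <- s) dE d (F i).
Proof.
elim: s => [|i s IH].
  by rewrite big_nil /dE big1 // => p _; rewrite big_nil mulr0.
rewrite big_cons -IH -dE_add; apply: eq_bigr => p _; by rewrite big_cons.
Qed.

Lemma dE_sumP T (I : finType) (P : pred I) (d : dist R T) (F : I -> T -> R) :
  dE d (fun x => \sum_(i | P i) F i x) = \sum_(i | P i) dE d (F i).
Proof.
rewrite (@dE_ext _ d _ (fun x => \sum_(i <- index_enum I) (if P i then F i x else 0))); last first.
  by apply: dall_T => x; rewrite big_mkcond.
rewrite dE_sum [RHS]big_mkcond; apply: eq_bigr => i _.
case: (P i); first by [].
by rewrite /dE big1 // => p _; rewrite mulr0.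
Qed.

Lemma dE_const T (d : dist R T) c : dE d (fun _ => c) = c * dE d (fun _ => 1).
Proof. by rewrite -dE_scale; apply: eq_bigr => p _; rewrite mulr1. Qed.

Definition dmass1 T (d : dist R T) := dE d (fun _ => 1) = 1.

Lemma dmass_bind T U (d : dist R T) (g : T -> dist R U) :
  dmass1 d -> dall (fun x => dmass1 (g x)) d -> dmass1 (dbind d g).
Proof.
rewrite /dmass1 dE_bind => H1 H2; rewrite -{2}H1; exact: dE_ext.
Qed.

Lemma dmass_ret T (x : T) : dmass1 (dret R x).
Proof. by rewrite /dmass1 dE_ret. Qed.

Lemma coins_cons T (x : T) s : coins R (x :: s) =
  dbind (duniform R [:: true; false]) (fun b =>
   dbind (coins R s) (fun t => dret R (if b then x :: t else t))).
Proof. by []. Qed.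

Lemma choices_cons B C (x : B) s (nb : B -> seq C) : choices R (x :: s) nb =
  dbind (duniform R (nb x)) (fun c =>
   dbind (choices R s nb) (fun t => dret R ((x, c) :: t))).
Proof. by []. Qed.

Lemma coins_pos T (s : seq T) : dpos (coins R s).
Proof.
elim: s => [|x s IH]; first exact: dpos_ret.
rewrite coins_cons.
apply: dpos_bind; first exact: dpos_uniform.
apply: dall_T => b; apply: dpos_bind => //; apply: dall_T => t; exact: dpos_ret.
Qed.

Lemma coins_mass T (s : seq T) : dmass1 (coins R s).
Proof.
elim: s => [|x s IH]; first exact: dmass_ret.
rewrite coins_cons.
apply: dmass_bind; first exact: dmass_uniform.
apply: dall_T => b; apply: dmass_bind => //; apply: dall_T => t; exact: dmass_ret.
Qed.

Lemma coins_supp (T : eqType) (s : seq T) :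
  dall (fun t => forall x, x \in t -> x \in s) (coins R s).
Proof.
elim: s => [|x s IH]; first by split.
rewrite coins_cons.
apply: dall_bind; apply: dall_T => b; apply: dall_bind.
apply: dall_impl IH => t Ht /=; split => // y; case: b => /=.
  by rewrite !in_cons => /orP [->//|/Ht ->]; rewrite orbT.
by move/Ht; rewrite in_cons => ->; rewrite orbT.
Qed.

Lemma choices_pos B C (s : seq B) (nb : B -> seq C) : dpos (choices R s nb).
Proof.
elim: s => [|x s IH]; first exact: dpos_ret.
rewrite choices_cons.
apply: dpos_bind; first exact: dpos_uniform.
apply: dall_T => b; apply: dpos_bind => //; apply: dall_T => t; exact: dpos_ret.
Qed.

Lemma choices_mass (B : eqType) C (s : seq B) (nb : B -> seq C) :
  (forall b, b \in s -> (0 < size (nb b))%N) -> dmass1 (choices R s nb).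
Proof.
elim: s => [|x s IH] Hnb; first exact: dmass_ret.
rewrite choices_cons.
apply: dmass_bind; first by apply: dmass_uniform; apply: Hnb; rewrite mem_head.
have {}IH : dmass1 (choices R s nb) by apply: IH => b Hb; apply: Hnb; rewrite in_cons Hb orbT.
apply: dall_T => b; apply: dmass_bind => //; apply: dall_T => t; exact: dmass_ret.
Qed.

Lemma choices_supp (B C : eqType) (s : seq B) (nb : B -> seq C) :
  dall (fun ch => map fst ch = s /\ forall p, p \in ch -> p.2 \in nb p.1) (choices R s nb).
Proof.
elim: s => [|x s IH]; first by split.
rewrite choices_cons.
apply: dall_bind; apply: dall_uniform => c Hc; apply: dall_bind.
apply: dall_impl IH => t [Ht1 Ht2]; split => //; split; first by rewrite /= Ht1.
by move=> p; rewrite in_cons => /orP [/eqP -> //|/Ht2].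
Qed.


Lemma dE_bind_ret T U (d : dist R T) (h : T -> U) f :
  dE (dbind d (fun t => dret R (h t))) f = dE d (fun t => f (h t)).
Proof. by rewrite dE_bind; apply: dE_ext; apply: dall_T => t; rewrite dE_ret. Qed.

Lemma dE_choices_cons B C x (s : seq B) (nb : B -> seq C) f :
  dE (choices R (x :: s) nb) f =
  (size (nb x))%:R^-1 * \sum_(c <- nb x) dE (choices R s nb) (fun t => f ((x, c) :: t)).
Proof.
rewrite choices_cons dE_bind dE_uniform; congr (_ * _); apply: eq_bigr => c _.
by rewrite dE_bind_ret.
Qed.

Lemma sum_eq1 (C : eqType) (l : seq C) r : uniq l -> r \in l ->
  \sum_(c <- l) (c == r)%:R = 1 :> R.
Proof.
move=> Hu Hr; rewrite (big_rem r) //= eqxx big1_seq ?addr0 // => c /andP [_ Hc].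
case: (eqVneq c r) => [E|]; last by [].
by move: Hc; rewrite E mem_rem_uniqF.
Qed.

Lemma choices_indep (B C : eqType) (s : seq B) (nb : B -> seq C) b r
  (g : seq (B * C) -> R) :
  uniq s -> b \in s -> r \in nb b -> uniq (nb b) ->
  dE (choices R s nb) (fun ch => ((b, r) \in ch)%:R * g (filter (fun p => p.1 != b) ch))
  = (size (nb b))%:R^-1 * dE (choices R s nb) (fun ch => g (filter (fun p => p.1 != b) ch)).
Proof.
elim: s g => [|x s IH] g; first by rewrite in_nil.
move=> /= /andP [Hx Hu] Hb Hr Hun.
rewrite !dE_choices_cons.
case: (eqVneq x b) => [Exb|Nxb].
  subst x.
  have E1 : forall c, dE (choices R s nb) (fun t => (((b, r) \in (b, c) :: t)%:R *
      g [seq p <- (b, c) :: t | p.1 != b]))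
    = (c == r)%:R * dE (choices R s nb) (fun t => g [seq p <- t | p.1 != b]).
    move=> c; rewrite -dE_scale; apply: dE_ext.
    apply: dall_impl (choices_supp s nb) => t [Ht1 _] /=.
    rewrite eqxx /= in_cons.
    have -> : ((b, r) \in t) = false.
      apply/negP => Hin; move: Hx; rewrite -Ht1 => /negP; apply.
      by apply/mapP; exists (b, r).
    by rewrite orbF xpair_eqE eqxx /= eq_sym.
  have E2 : forall c, dE (choices R s nb) (fun t => g [seq p <- (b, c) :: t | p.1 != b])
    = dE (choices R s nb) (fun t => g [seq p <- t | p.1 != b]).
    by move=> c; apply: dE_ext; apply: dall_T => t /=; rewrite eqxx.
  rewrite (eq_bigr _ (fun c _ => E1 c)) (eq_bigr _ (fun c _ => E2 c)).
  have Hs : (0 < size (nb b))%N by case: (nb b) Hr.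
  rewrite -big_distrl /= sum_eq1 // big_const_seq count_predT iter_addr_0 mul1r.
  congr (_ * _); rewrite -[dE _ _ *+ _]mulr_natl mulrA mulVf ?mul1r //.
  by rewrite pnatr_eq0 -lt0n.
have Hbs : b \in s by move: Hb; rewrite in_cons eq_sym (negbTE Nxb).
have E3 : forall c, dE (choices R s nb) (fun t => (((b, r) \in (x, c) :: t)%:R *
      g [seq p <- (x, c) :: t | p.1 != b]))
   = (size (nb b))%:R^-1 * dE (choices R s nb) (fun t => g [seq p <- (x, c) :: t | p.1 != b]).
  move=> c; have := IH (fun u => g ((x, c) :: u)) Hu Hbs Hr Hun => /= IHc.
  rewrite (@dE_ext _ _ _ (fun t => ((b, r) \in t)%:R * g ((x, c) :: [seq p <- t | p.1 != b]))); last first.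
    apply: dall_T => t /=; rewrite Nxb in_cons xpair_eqE.
    by rewrite eq_sym (negbTE Nxb).
  rewrite IHc; congr (_ * _); apply: dE_ext; apply: dall_T => t /=.
  by rewrite Nxb.
rewrite (eq_bigr _ (fun c _ => E3 c)) -big_distrr /=.
by rewrite mulrCA.
Qed.


End DistLemmas.


Lemma disjU (T : finType) (A B C : {set T}) :
  [disjoint A & B] -> [disjoint A & C] -> [disjoint A & B :|: C].
Proof. by rewrite -!setI_eq0 setIUr => /eqP -> /eqP ->; rewrite setU0. Qed.

Lemma uniq_fst (A B : eqType) (l : seq (A * B)) a c1 c2 :
  uniq (map fst l) -> (a, c1) \in l -> (a, c2) \in l -> c1 = c2.
Proof.
elim: l => [|p l IH] //= /andP [Hp Hu]; rewrite !in_cons.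
case/orP => [/eqP E1|H1]; case/orP => [/eqP E2|H2].
- by rewrite -E1 in E2; case: E2.
- by move: Hp; rewrite -E1 /=; move/negP; case; apply/mapP; exists (a, c2).
- by move: Hp; rewrite -E2 /=; move/negP; case; apply/mapP; exists (a, c1).
- exact: IH.
Qed.

Section Model.
Variable R : realFieldType.
Variable n : nat.
Variables (e : rel 'I_n) (w : 'I_n -> 'I_n -> R) (eps TL : R).
Hypothesis eps_gt0 : 0 < eps.
Local Notation cluster := {set 'I_n}.
Variables (red0 B0 : {set cluster}).
Hypothesis Htriv : trivIset (red0 :|: B0).
Hypothesis Hdisj : [disjoint red0 & B0].

Definition props (Ec : {set cluster * cluster}) :=
  enum [set b : cluster | [exists r : cluster, (b, r) \in Ec]].
Definition nbrs (Ec : {set cluster * cluster}) (b : cluster) :=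
  enum [set r : cluster | (b, r) \in Ec].
Definition selF (ch : seq (cluster * cluster)) (pi : seq cluster) (r : cluster) :=
  select_prefix eps r [seq b <- pi | (b, r) \in ch].
Definition mergedF ch pi (b : cluster) := [exists r : cluster, b \in selF ch pi r].
Definition newclF ch pi (r : cluster) := r :|: \bigcup_(b <- selF ch pi r) b.
Definition keep (q : cluster) := (#|q|)%:R <= (1 + eps) * (start_size red0 q)%:R.
Definition EcF (Ec : {set cluster * cluster}) ch pi :=
  [set q in [set (p.1, newclF ch pi p.2) | p in Ec & ~~ mergedF ch pi p.1]
     | (TL <= Wt e w q.1 q.2) & keep q.2].
Definition PF (P : {set cluster}) ch pi :=
  [set newclF ch pi X | X in P & ~~ mergedF ch pi X].

Lemma inner_stepE (st : state n) : inner_step e w eps TL red0 st =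
  dbind (choices R (props st.2) (nbrs st.2)) (fun ch =>
  dbind (duniform R (permutations (props st.2))) (fun pi =>
  dret R (PF st.1 ch pi, EcF st.2 ch pi))).
Proof. by []. Qed.

Lemma loop0 st : inner_loop e w eps TL red0 0 st =
  if st.2 == set0 then dret R (Some 0%N) else dret R None.
Proof. by []. Qed.

Lemma loopS f st : inner_loop e w eps TL red0 f.+1 st =
  if st.2 == set0 then dret R (Some 0%N) else
  dbind (inner_step e w eps TL red0 st) (fun st' =>
    dbind (inner_loop e w eps TL red0 f st') (fun o => dret R (omap S o))).
Proof. by []. Qed.


Definition Inv (Ec : {set cluster * cluster}) :=
  (forall p, p \in Ec -> p.1 \in B0) /\
  (forall p q, p \in Ec -> q \in Ec -> [disjoint p.1 & q.2]).
Definition SuppCh (Ec : {set cluster * cluster}) (ch : seq (cluster * cluster)) :=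
  map fst ch = props Ec /\ (forall p, p \in ch -> p.2 \in nbrs Ec p.1).

Lemma mem_props Ec b : (b \in props Ec) = [exists r, (b, r) \in Ec].
Proof. by rewrite mem_enum inE. Qed.

Lemma mem_nbrs Ec b r : (r \in nbrs Ec b) = ((b, r) \in Ec).
Proof. by rewrite mem_enum inE. Qed.

Lemma ch_Ec Ec ch p : SuppCh Ec ch -> p \in ch -> p \in Ec.
Proof. by case=> _ H /H; rewrite mem_nbrs; case: p. Qed.

Lemma ch_pi Ec ch pi x r : SuppCh Ec ch -> perm_eq pi (props Ec) ->
  (x, r) \in ch -> x \in pi.
Proof.
case=> H1 _ Hp Hx; rewrite (perm_mem Hp) -H1; apply/mapP; by exists (x, r).
Qed.

Lemma sel_mem ch pi r x : x \in selF ch pi r -> x \in pi /\ (x, r) \in ch.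
Proof. by rewrite /selF /select_prefix => /mem_take; rewrite mem_filter => /andP [-> ->]. Qed.

Lemma uniq_pi Ec pi : perm_eq pi (props Ec) -> uniq pi.
Proof. by move/perm_uniq => ->; apply: enum_uniq. Qed.

Lemma sel_uniq ch pi r : uniq pi -> uniq (selF ch pi r).
Proof. by move=> Hu; rewrite /selF /select_prefix take_uniq // filter_uniq. Qed.

Lemma B0_disj x y : x \in B0 -> y \in B0 -> x != y -> [disjoint x & y].
Proof.
move=> Hx Hy Nxy; move/trivIsetP: Htriv; apply => //; by rewrite inE ?Hx ?Hy orbT.
Qed.

Lemma red_B0_disj Y x : Y \in red0 -> x \in B0 -> [disjoint Y & x].
Proof.
move=> HY Hx; move/trivIsetP: Htriv; apply; rewrite ?inE ?HY ?Hx ?orbT //.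
apply/negP => /eqP E; move: Hdisj; rewrite -setI_eq0 => /eqP/setP/(_ Y).
by rewrite !inE HY E Hx.
Qed.

Lemma card_newcl_gen (l : seq cluster) (r : cluster) : uniq l ->
  (forall x, x \in l -> x \in B0 /\ [disjoint x & r]) ->
  #|r :|: \bigcup_(x <- l) x| = (#|r| + csize l)%N.
Proof.
elim: l r => [|x l IH] r.
  by move=> _ _; rewrite big_nil setU0 /csize big_nil addn0.
move=> /= /andP [Hx Hu] H.
have [HxB Hxr] := H x (mem_head _ _).
rewrite big_cons setUA IH //.
- rewrite cardsU (disjoint_setI0 _) ?cards0 ?subn0; last by rewrite disjoint_sym.
  by rewrite /csize big_cons addnA.
move=> y Hy; have [HyB Hyr] : y \in B0 /\ [disjoint y & r] by apply: H; rewrite in_cons Hy orbT.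
split => //; apply: disjU => //.
apply: B0_disj => //; apply/negP => /eqP E; by move: Hx; rewrite -E Hy.
Qed.

Lemma card_newcl Ec ch pi r : Inv Ec -> SuppCh Ec ch -> perm_eq pi (props Ec) ->
  #|newclF ch pi r| = (#|r| + csize (selF ch pi r))%N.
Proof.
move=> [I1 I2] Hch Hpi; rewrite /newclF card_newcl_gen //.
  exact/sel_uniq/(uniq_pi Hpi).
move=> x /sel_mem [_ /(ch_Ec Hch) Hx]; split; first exact: (I1 _ Hx).
exact: (I2 _ _ Hx Hx).
Qed.

Lemma start_newcl Ec ch pi r : Inv Ec -> SuppCh Ec ch -> perm_eq pi (props Ec) ->
  (start_size red0 (newclF ch pi r) <= #|r|)%N.
Proof.
move=> [I1 I2] Hch Hpi; rewrite /start_size.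
apply: (@leq_trans (\sum_(Y in red0 | Y \subset r) #|Y|)).
  rewrite [X in (X <= _)%N]big_mkcond [X in (_ <= X)%N]big_mkcond /=.
  apply: leq_sum => Y _; case: (boolP ((Y \in red0) && (Y \subset newclF ch pi r))) => //.
  move=> /andP [HY Hsub]; rewrite HY /=.
  suff -> : Y \subset r by [].
  apply/subsetP => z Hz; move/subsetP: Hsub => /(_ z Hz).
  rewrite /newclF inE => /orP [//|Hz2]; exfalso.
  move: Hz2; elim: (selF ch pi r) (@sel_mem ch pi r) => [|x l IH] Hl.
    by rewrite big_nil inE.
  rewrite big_cons inE => /orP [Hzx|]; last first.
    by apply: IH => y Hy; apply: Hl; rewrite in_cons Hy orbT.
  have [_ /(ch_Ec Hch) Hx] := Hl x (mem_head _ _).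
  have := red_B0_disj HY (I1 _ Hx); rewrite -setI_eq0 => /eqP/setP/(_ z).
  by rewrite !inE Hz Hzx.
set Q := [set Y in red0 | Y \subset r].
have HQ : trivIset Q.
  apply: trivIsetS Htriv; apply/subsetP => Y; by rewrite !inE => /andP [->].
move: HQ; rewrite /trivIset => /eqP HQ.
have -> : \sum_(Y in red0 | Y \subset r) #|Y| = \sum_(Y in Q) #|Y|.
  by apply: eq_bigl => Y; rewrite inE.
rewrite HQ; apply: subset_leq_card; apply/subsetP => z /bigcupP [Y].
by rewrite inE => /andP [_ /subsetP]; apply.
Qed.


Definition Osum (r : cluster) (u : seq (cluster * cluster)) : nat :=
  \sum_(x : cluster | (x, r) \in u) #|x|.

Lemma csize_le_sum (l : seq cluster) (P : pred cluster) : uniq l ->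
  (forall x, x \in l -> P x) -> (csize l <= \sum_(x | P x) #|x|)%N.
Proof.
move=> Hu H; rewrite /csize big_uniq // [X in (X <= _)%N]big_mkcond [X in (_ <= X)%N]big_mkcond.
apply: leq_sum => x _; case: (boolP (x \in l)) => // /H ->; by [].
Qed.

Lemma sum_le_csize (l : seq cluster) (P : pred cluster) : uniq l ->
  (forall x, P x -> x \in l) -> (\sum_(x | P x) #|x| <= csize l)%N.
Proof.
move=> Hu H; rewrite /csize big_uniq // [X in (X <= _)%N]big_mkcond [X in (_ <= X)%N]big_mkcond.
apply: leq_sum => x _; case: (boolP (P x)) => // /H ->; by [].
Qed.

Lemma sp_in (r : cluster) (s : seq cluster) (b : cluster) : uniq s -> b \in s ->
  (forall i, (i < index b s)%N -> ~~ (eps * (#|r|)%:R < (csize (take i.+1 s))%:R)) ->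
  b \in select_prefix eps r s.
Proof.
move=> Hu Hb H; rewrite /select_prefix in_take //.
set a := (fun i => _); set j := find a _.
rewrite ltnS; case: (leqP (index b s) j) => // Hj; exfalso.
have Hjs : (j < size s)%N by apply: (ltn_trans Hj); rewrite index_mem.
have Hhas : has a (iota 0 (size s)) by rewrite has_find size_iota.
have := nth_find 0%N Hhas; rewrite -/j nth_iota // add0n.
by move/negP: (H j Hj).
Qed.

Lemma sp_exceed (r : cluster) (s : seq cluster) : eps * (#|r|)%:R < (csize s)%:R ->
  eps * (#|r|)%:R < (csize (select_prefix eps r s))%:R.
Proof.
move=> H.
have Hs : (0 < size s)%N.
  case: s H => //; rewrite /csize big_nil => H; exfalso.
  have : 0 <= eps * (#|r|)%:R by rewrite mulr_ge0 // ltW.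
  by rewrite leNgt H.
rewrite /select_prefix; set a := (fun i => _).
have Hhas : has a (iota 0 (size s)).
  apply/hasP; exists (size s).-1; first by rewrite mem_iota add0n leq0n /= prednK.
  by rewrite /a prednK // take_size.
have := nth_find 0%N Hhas; rewrite nth_iota ?add0n //.
by move: Hhas; rewrite has_find size_iota.
Qed.

Lemma D1 Ec ch pi (b r' : cluster) : SuppCh Ec ch -> perm_eq pi (props Ec) -> (b, r') \in ch ->
  (Osum r' [seq p <- ch | p.1 != b])%:R <= eps * (#|r'|)%:R -> mergedF ch pi b.
Proof.
move=> Hch Hpi Hb Hle; apply/existsP; exists r'; rewrite /selF.
have Hupi := uniq_pi Hpi.
set s := [seq x <- pi | (x, r') \in ch].
have Hus : uniq s by rewrite filter_uniq.
have Hbs : b \in s by rewrite mem_filter Hb (ch_pi Hch Hpi Hb).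
apply: sp_in => // i Hi; rewrite -leNgt; apply: le_trans Hle; rewrite ler_nat.
apply: csize_le_sum; first by rewrite take_uniq.
move=> x Hx; rewrite mem_filter /=.
have Hxs := mem_take Hx; move: (Hxs); rewrite mem_filter => /andP [-> _].
rewrite andbT; apply/negP => /eqP E; move: Hx; rewrite E in_take //.
by rewrite ltnS leqNgt Hi.
Qed.

Lemma D2 Ec ch pi (b r : cluster) : Inv Ec -> SuppCh Ec ch -> perm_eq pi (props Ec) ->
  eps * (#|r|)%:R < (Osum r [seq p <- ch | p.1 != b])%:R -> ~~ keep (newclF ch pi r).
Proof.
move=> HI Hch Hpi H.
have Hupi := uniq_pi Hpi.
set s := [seq x <- pi | (x, r) \in ch].
have Hs : eps * (#|r|)%:R < (csize s)%:R.
  apply: (lt_le_trans H); rewrite ler_nat; apply: sum_le_csize; first by rewrite filter_uniq.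
  move=> x; rewrite mem_filter => /andP [_ Hx].
  by rewrite mem_filter Hx (ch_pi Hch Hpi Hx).
have Hsel := sp_exceed Hs.
rewrite /keep -ltNge (card_newcl r HI Hch Hpi) natrD.
have Hst := start_newcl r HI Hch Hpi.
apply: (@le_lt_trans _ _ ((1 + eps) * (#|r|)%:R)).
  by rewrite ler_wpM2l ?ler_nat // addr_ge0 // ltW.
by rewrite mulrDl mul1r ltrD2l.
Qed.


Definition le_g (r : cluster) (u : seq (cluster * cluster)) : bool :=
  (Osum r u)%:R <= eps * (#|r|)%:R.
Definition le_cap (b r : cluster) ch : bool := le_g r [seq p <- ch | p.1 != b].
Definition mb Ec (b : cluster) ch : R :=
  \sum_(r' <- nbrs Ec b) ((b, r') \in ch)%:R * (le_cap b r' ch)%:R.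
Definition fb (b r : cluster) ch : R := (~~ le_cap b r ch)%:R.

Lemma edge_bound Ec ch pi (b r : cluster) : Inv Ec -> SuppCh Ec ch ->
  perm_eq pi (props Ec) -> (b, r) \in Ec ->
  ((~~ mergedF ch pi b) && keep (newclF ch pi r))%:R <= 1 - (mb Ec b ch + fb b r ch) / 2.
Proof.
move=> HI Hch Hpi Hbr.
have [c Hc] : exists c, (b, c) \in ch.
  have : b \in map fst ch by rewrite Hch.1 mem_props; apply/existsP; exists r.
  by case/mapP => [[x y]] Hxy /= ->; exists y.
have Huch : uniq (map fst ch) by rewrite Hch.1 enum_uniq.
have Hcn : c \in nbrs Ec b by exact: (Hch.2 _ Hc).
have Emb : mb Ec b ch = (le_cap b c ch)%:R.
  rewrite /mb (eq_bigr (fun r' => (r' == c)%:R * (le_cap b c ch)%:R)); last first.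
    move=> r' _; case: (boolP ((b, r') \in ch)) => H.
      by rewrite (uniq_fst Huch H Hc) eqxx.
    case: (eqVneq r' c) => [E|E]; first by move: H; rewrite E Hc.
    by rewrite /= !mul0r.
  by rewrite -big_distrl /= sum_eq1 ?mul1r // enum_uniq.
rewrite Emb /fb; case: (boolP (le_cap b c ch)) => Hle.
  have -> : mergedF ch pi b by apply: D1 Hch Hpi Hc Hle.
  by case: (le_cap b r ch) => /=; lra.
case: (boolP (le_cap b r ch)) => Hr /=.
  by case: (_ && _) => /=; lra.
have Hlt : eps * (#|r|)%:R < (Osum r [seq p <- ch | p.1 != b])%:R by rewrite ltNge.
rewrite (negbTE (D2 HI Hch Hpi Hlt)) andbF /=; lra.
Qed.

Lemma count_bound Ec ch pi :
  (#|EcF Ec ch pi|)%:R <= \sum_(p in Ec) ((~~ mergedF ch pi p.1) && keep (newclF ch pi p.2))%:R :> R.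
Proof.
set S := [set p in Ec | ~~ mergedF ch pi p.1 & keep (newclF ch pi p.2)].
have H1 : (#|EcF Ec ch pi| <= #|S|)%N.
  apply: leq_trans (leq_imset_card (fun p => (p.1, newclF ch pi p.2)) S).
  apply: subset_leq_card; apply/subsetP => q; rewrite inE => /andP [Hq /andP [_ Hk]].
  move/imsetP: Hq => [p Hp Eq]; apply/imsetP; exists p => //.
  rewrite Eq /= in Hk; move: Hp; rewrite !inE => /andP [-> ->]; by rewrite Hk.
apply: (@le_trans _ _ (#|S|)%:R); first by rewrite ler_nat.
rewrite -sum1_card natr_sum [leLHS]big_mkcond [leRHS]big_mkcond /=.
apply: ler_sum => p _; rewrite !inE.
by case: (p \in Ec); case: (~~ _ && _).
Qed.


Lemma sum_over_pairs (Ec : {set cluster * cluster}) (F : cluster -> cluster -> R) :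
  \sum_(p in Ec) F p.1 p.2 = \sum_(b : cluster) \sum_(r | (b, r) \in Ec) F b r.
Proof.
rewrite (pair_big_dep predT (fun b r => (b, r) \in Ec)) /=.
by apply: eq_bigl => -[x y].
Qed.

Lemma per_b (Ec : {set cluster * cluster}) (b : cluster) :
  \sum_(r | (b, r) \in Ec)
     (dE (choices R (props Ec) (nbrs Ec)) (mb Ec b) +
      dE (choices R (props Ec) (nbrs Ec)) (fb b r))
  = \sum_(r | (b, r) \in Ec) 1.
Proof.
set C := choices R (props Ec) (nbrs Ec).
case: (boolP (b \in props Ec)) => Hb; last first.
  have H0 : forall r, ((b, r) \in Ec) = false.
    move=> r; apply/negbTE; apply/negP => Hr; move/negP: Hb; apply.
    by rewrite mem_props; apply/existsP; exists r.
  by rewrite !big_pred0.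
have HC : dmass1 C.
  apply: choices_mass => x; rewrite mem_props => /existsP [r0 Hr].
  by rewrite -cardE card_gt0; apply/set0Pn; exists r0; rewrite inE.
set Nb := [set r | (b, r) \in Ec].
have ENb : forall F : cluster -> R, \sum_(r | (b, r) \in Ec) F r = \sum_(r in Nb) F r.
  by move=> F; apply: eq_bigl => r; rewrite inE.
have Hsz : size (nbrs Ec b) = #|Nb| by rewrite cardE.
have HNb : (0 < #|Nb|)%N.
  by move: Hb; rewrite mem_props => /existsP [r Hr]; rewrite card_gt0; apply/set0Pn; exists r; rewrite inE.
have Emb : dE C (mb Ec b) = (#|Nb|)%:R^-1 *
    \sum_(r' in Nb) dE C (fun ch => (le_cap b r' ch)%:R).
  rewrite /mb dE_sum -Hsz big_distrr /= /nbrs -/Nb big_enum /=; apply: eq_bigr => r' Hr'.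
  have Hrn : r' \in nbrs Ec b by rewrite mem_nbrs; move: Hr'; rewrite inE.
  rewrite /C (@choices_indep _ _ _ (props Ec) (nbrs Ec) b r' (fun u => (le_g r' u)%:R)) ?enum_uniq //.
rewrite !ENb big_split /= sumr_const Emb -[(_ * _) *+ _]mulr_natr mulrAC mulVf ?mul1r; last first.
  by rewrite pnatr_eq0 -lt0n.
rewrite -big_split /=; apply: eq_bigr => r _.
rewrite /fb -dE_add; rewrite /dmass1 in HC; rewrite -[RHS]HC; apply: dE_ext; apply: dall_T => ch.
by case: (le_cap b r ch); rewrite /= ?addr0 ?add0r.
Qed.

Lemma inner_stepE2 (P : {set cluster}) Ec : inner_step e w eps TL red0 (P, Ec) =
  dbind (choices R (props Ec) (nbrs Ec)) (fun ch =>
  dbind (duniform R (permutations (props Ec))) (fun pi =>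
  dret R (PF P ch pi, EcF Ec ch pi))).
Proof. by []. Qed.

Lemma C_mass Ec : dmass1 (choices R (props Ec) (nbrs Ec)).
Proof.
apply: choices_mass => x; rewrite mem_props => /existsP [r0 Hr].
by rewrite -cardE card_gt0; apply/set0Pn; exists r0; rewrite inE.
Qed.

Lemma perm_mass Ec : dmass1 (duniform R (permutations (props Ec))).
Proof.
apply: dmass_uniform.
have Hin : props Ec \in permutations (props Ec) by rewrite mem_permutations.
by rewrite lt0n size_eq0; apply/eqP => E; move: Hin; rewrite E in_nil.
Qed.

Lemma dE_aff T (d : dist R T) f g : dmass1 d ->
  dE d (fun x => 1 - (f x + g x) / 2) = 1 - (dE d f + dE d g) / 2.
Proof.
move=> Hm.
rewrite (dE_ext (g := fun x => 1 + ((- 2^-1) * f x + (- 2^-1) * g x))); last first.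
  by apply: dall_T => x; ring.
rewrite dE_add dE_const Hm mul1r dE_add !dE_scale; ring.
Qed.

Lemma step_exp (P : {set cluster}) Ec : Inv Ec ->
  dE (inner_step e w eps TL red0 (P, Ec)) (fun st => (#|st.2|)%:R) <= (#|Ec|)%:R / 2.
Proof.
move=> HI.
rewrite inner_stepE2 dE_bind.
set C := choices R (props Ec) (nbrs Ec).
have HCm : dmass1 C := C_mass Ec.
apply: (@le_trans _ _ (dE C (fun ch => \sum_(p in Ec) (1 - (mb Ec p.1 ch + fb p.1 p.2 ch) / 2)))).
  apply: dE_le; first exact: choices_pos.
  have HS := choices_supp R (props Ec) (nbrs Ec).
  apply: dall_impl HS => ch Hch.
  rewrite dE_bind_ret /=.
  set B := \sum_(p in Ec) _.
  apply: (@le_trans _ _ (dE (duniform R (permutations (props Ec))) (fun _ => B))).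
    apply: dE_le; first exact: dpos_uniform.
    apply: dall_uniform => pi; rewrite mem_permutations => Hpi /=.
    apply: le_trans (count_bound Ec ch pi) _.
    apply: ler_sum => -[b r] Hp; exact: edge_bound HI Hch Hpi Hp.
  by rewrite dE_const (perm_mass Ec) mulr1.
rewrite dE_sumP.
rewrite (eq_bigr (fun p => 1 - (dE C (mb Ec p.1) + dE C (fb p.1 p.2)) / 2)); last first.
  by move=> p _; rewrite dE_aff.
rewrite (sum_over_pairs Ec (fun b r => 1 - (dE C (mb Ec b) + dE C (fb b r)) / 2)).
rewrite (eq_bigr (fun b => (\sum_(r | (b, r) \in Ec) 1) / 2)); last first.
  by move=> b _; rewrite sumrB -mulr_suml per_b; field.
rewrite -mulr_suml -(sum_over_pairs Ec (fun _ _ => 1)) sumr_const.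
by [].
Qed.

Lemma step_supp (P : {set cluster}) Ec :
  dall (fun st => exists ch pi, [/\ SuppCh Ec ch, perm_eq pi (props Ec) &
          st = (PF P ch pi, EcF Ec ch pi)]) (inner_step e w eps TL red0 (P, Ec)).
Proof.
rewrite inner_stepE2.
refine (dall_bind _).
have HS := choices_supp R (props Ec) (nbrs Ec).
apply: dall_impl HS => ch Hch; apply: dall_bind.
apply: dall_uniform => pi; rewrite mem_permutations => Hpi.
by apply: dall_ret; exists ch, pi; split.
Qed.

Lemma step_pos (st : state n) : dpos (inner_step e w eps TL red0 st).
Proof.
case: st => P Ec; rewrite inner_stepE2; apply: dpos_bind; first exact: choices_pos.
apply: dall_T => ch; apply: dpos_bind; first exact: dpos_uniform.
by apply: dall_T => pi; apply: dpos_ret.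
Qed.

Lemma step_mass (st : state n) : dmass1 (inner_step e w eps TL red0 st).
Proof.
case: st => P Ec; rewrite inner_stepE2; apply: dmass_bind; first exact: C_mass.
apply: dall_T => ch; apply: dmass_bind; first exact: perm_mass.
by apply: dall_T => pi; apply: dmass_ret.
Qed.

Lemma EcF_mem Ec ch pi q : q \in EcF Ec ch pi ->
  exists p, [/\ p \in Ec, ~~ mergedF ch pi p.1 & q = (p.1, newclF ch pi p.2)].
Proof.
rewrite inE => /andP [/imsetP [p Hp ->] _]; exists p; move: Hp; rewrite inE.
by case/andP => -> ->.
Qed.

Lemma disj_bigcup_seq (A : cluster) (l : seq cluster) :
  (forall x, x \in l -> [disjoint A & x]) -> [disjoint A & \bigcup_(x <- l) x].
Proof.
elim: l => [|x l IH] H; first by rewrite big_nil -setI_eq0 setI0.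
rewrite big_cons; apply: disjU; first by apply: H; rewrite mem_head.
by apply: IH => y Hy; apply: H; rewrite in_cons Hy orbT.
Qed.

Lemma Inv_step Ec ch pi : Inv Ec -> SuppCh Ec ch -> perm_eq pi (props Ec) ->
  Inv (EcF Ec ch pi).
Proof.
move=> [I1 I2] Hch Hpi; split.
  by move=> q /EcF_mem [p [Hp _ ->]] /=; apply: I1.
move=> q q' /EcF_mem [p [Hp Hm ->]] /EcF_mem [p' [Hp' _ ->]] /=.
rewrite /newclF; apply: disjU; first exact: I2.
apply: disj_bigcup_seq => x Hx.
have [_ /(ch_Ec Hch) Hx2] := sel_mem Hx.
apply: B0_disj; [exact: I1| exact: (I1 _ Hx2)|].
apply/negP => /eqP E; move/negP: Hm; apply; rewrite E.
by apply/existsP; exists p'.2.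
Qed.

Lemma sp_head (r x : cluster) s : x \in select_prefix eps r (x :: s).
Proof. rewrite /select_prefix; move: (find _ _) => j; by rewrite /= mem_head. Qed.

Definition blues (Ec : {set cluster * cluster}) := [set p.1 | p in Ec].

Lemma blues_step Ec ch pi : Ec != set0 -> SuppCh Ec ch -> perm_eq pi (props Ec) ->
  (#|blues (EcF Ec ch pi)| < #|blues Ec|)%N.
Proof.
move=> HE Hch Hpi.
have [p Hp] := set0Pn _ HE.
have [c Hc] : exists c, (p.1, c) \in ch.
  have : p.1 \in map fst ch by rewrite Hch.1 mem_props; apply/existsP; exists p.2; rewrite -surjective_pairing.
  by case/mapP => [[x y]] Hxy /= ->; exists y.
have Hbs : p.1 \in [seq x <- pi | (x, c) \in ch] by rewrite mem_filter Hc (ch_pi Hch Hpi Hc).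
have [x0 [Hx0m Hx0b]] : exists x0, mergedF ch pi x0 /\ x0 \in blues Ec.
  move: Hbs; case Es: [seq x <- pi | (x, c) \in ch] => [|x0 s'] // _.
  have Hx0 : x0 \in selF ch pi c by rewrite /selF Es sp_head.
  exists x0; split; first by apply/existsP; exists c.
  have [_ /(ch_Ec Hch) H] := sel_mem Hx0.
  by apply/imsetP; exists (x0, c).
have Hsub : blues (EcF Ec ch pi) \subset blues Ec :\ x0.
  apply/subsetP => b /imsetP [q /EcF_mem [p' [Hp' Hm ->]] ->] /=.
  rewrite !inE; apply/andP; split; last by apply/imsetP; exists p'.
  by apply/negP => /eqP E; move: Hm; rewrite E Hx0m.
apply: (leq_ltn_trans (subset_leq_card Hsub)).
by rewrite [X in (_ < X)%N](cardsD1 x0) Hx0b.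
Qed.

Lemma loop_pos f (st : state n) : dpos (inner_loop e w eps TL red0 f st).
Proof.
elim: f st => [|f IH] st; first by rewrite loop0; case: ifP => _; apply: dpos_ret.
rewrite loopS; case: ifP => _; first exact: dpos_ret.
apply: dpos_bind; first exact: step_pos.
apply: dall_T => st'; apply: dpos_bind => //; apply: dall_T => o; exact: dpos_ret.
Qed.

Lemma loop_mass f (st : state n) : dmass1 (inner_loop e w eps TL red0 f st).
Proof.
elim: f st => [|f IH] st; first by rewrite loop0; case: ifP => _; apply: dmass_ret.
rewrite loopS; case: ifP => _; first exact: dmass_ret.
apply: dmass_bind; first exact: step_mass.
apply: dall_T => st'; apply: dmass_bind => //; apply: dall_T => o; exact: dmass_ret.
Qed.

Definition failT (T : nat) (o : option nat) : R :=
  (if o is Some m then ~~ (m <= T)%N else true)%:R.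

Lemma failT_le1 T o : failT T o <= 1.
Proof. by rewrite /failT; case: o => [m|] //; case: (~~ _). Qed.

Lemma blues_gt0 (Ec : {set cluster * cluster}) : Ec != set0 -> (0 < #|blues Ec|)%N.
Proof.
move=> /set0Pn [p Hp]; rewrite card_gt0; apply/set0Pn; exists p.1.
by apply/imsetP; exists p.
Qed.

Lemma loop_tail T f (P : {set cluster}) Ec : Inv Ec -> (T <= f)%N ->
  dE (inner_loop e w eps TL red0 f (P, Ec)) (failT T) <= (#|Ec|)%:R / 2 ^+ T.
Proof.
elim: T f P Ec => [|T IH] f P Ec HI HTf.
  case: (eqVneq Ec set0) => [E|HE].
    subst Ec; case: f HTf => [|f] _; [rewrite loop0|rewrite loopS];
      rewrite [_ == set0]eqxx dE_ret /failT cards0 mul0r //.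
  apply: (@le_trans _ _ (dE (inner_loop e w eps TL red0 f (P, Ec)) (fun _ => 1))).
    apply: dE_le; first exact: loop_pos.
    by apply: dall_T => o; apply: failT_le1.
  rewrite (loop_mass f (P, Ec)) expr0 divr1 ler1n.
  by move: HE => /set0Pn [p Hp]; rewrite card_gt0; apply/set0Pn; exists p.
case: f HTf => [//|f] HTf; rewrite ltnS in HTf.
rewrite loopS [(P, Ec).2]/=; case: (eqVneq Ec set0) => [E|HE].
  by subst Ec; rewrite dE_ret /failT cards0 mul0r.
rewrite dE_bind.
apply: (@le_trans _ _ (dE (inner_step e w eps TL red0 (P, Ec))
           (fun st => (2 ^+ T)^-1 * (#|st.2|)%:R))).
  apply: dE_le; first exact: step_pos.
  apply: dall_impl (step_supp P Ec) => st [ch [pi [Hch Hpi ->]]].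
  rewrite dE_bind_ret.
  rewrite (dE_ext (g := failT T)); last first.
    by apply: dall_T => -[m|] //=; rewrite /failT ltnS.
  rewrite mulrC; apply: IH => //; exact: Inv_step.
rewrite dE_scale.
have H := step_exp P HI.
apply: (@le_trans _ _ ((2 ^+ T)^-1 * ((#|Ec|)%:R / 2))).
  by rewrite ler_wpM2l // invr_ge0 exprn_ge0.
have H2 : (2 ^+ T : R) != 0 by rewrite expf_neq0 // pnatr_eq0.
rewrite le_eqVlt; apply/orP; left; apply/eqP; rewrite exprS; field.
exact: H2.
Qed.

Lemma loop_det f (P : {set cluster}) Ec : (#|blues Ec| <= f)%N ->
  dall (fun o => exists2 m, o = Some m & (m <= #|blues Ec|)%N)
    (inner_loop e w eps TL red0 f (P, Ec)).
Proof.
elim: f P Ec => [|f IH] P Ec Hf.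
  have E : Ec = set0.
    apply/eqP; apply/negP => HE; move: (blues_gt0 (introN idP HE)).
    by rewrite leqNgt in Hf; rewrite (negbTE Hf).
  by subst Ec; rewrite loop0 [_ == set0]eqxx; apply: dall_ret; exists 0%N.
rewrite loopS [(P, Ec).2]/=; case: (eqVneq Ec set0) => [E|HE].
  by subst Ec; apply: dall_ret; exists 0%N.
apply: dall_bind.
apply: dall_impl (step_supp P Ec) => st [ch [pi [Hch Hpi ->]]].
have Hlt := blues_step HE Hch Hpi.
apply: dall_bind.
apply: dall_impl (IH (PF P ch pi) (EcF Ec ch pi) _) => [o [m -> Hm]|]; last first.
  by rewrite -ltnS; apply: leq_trans Hlt Hf.
apply: dall_ret; exists m.+1 => //.
exact: leq_ltn_trans Hm Hlt.
Qed.

End Model.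


Lemma dprobE (R : realFieldType) T (d : dist R T) (A : pred T) :
  dprob d A = dE d (fun x => (A x)%:R).
Proof.
rewrite /dprob /dE big_mkcond; apply: eq_bigr => p _.
by case: (A p.2); rewrite ?mulr1 ?mulr0.
Qed.

Lemma card_part_le n (P0 : {set {set 'I_n}}) :
  partition P0 [set: 'I_n] -> (#|P0| <= n)%N.
Proof.
move=> Hp; have H := card_partition Hp; rewrite cardsT card_ord in H.
apply: (@leq_trans (\sum_(A in P0) #|A|)); last by rewrite -H.
rewrite -sum1_card; apply: leq_sum => A HA; rewrite card_gt0.
apply/negP => /eqP E; move: Hp => /and3P [_ _ H0]; move/negP: H0; apply.
by rewrite -E.
Qed.

Theorem mainTheorem6 (R : realFieldType) (eps : R) :
  0 < eps ->
  forall k : nat, exists C : nat,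
  forall (n : nat) (e : rel 'I_n) (w : 'I_n -> 'I_n -> R) (TL : R)
         (P0 : {set {set 'I_n}}),
    symmetric e -> irreflexive e ->
    (forall x y, e x y -> 0 < w x y) ->
    (forall x y, e x y -> w x y = w y x) ->
    partition P0 [set: 'I_n] ->
    (exists X Y, [/\ X \in P0, Y \in P0, X != Y, Hedge e X Y
                   & TL <= Wt e w X Y]) ->
    1 - (n%:R ^- k) <=
      dprob (outer_round e w eps TL P0)
        (fun o => if o is Some m then (m <= C * up_log 2 n)%N else false).
Proof.
move=> Heps k; exists k.+2 => n e w TL P0 _ _ _ _ Hpart _.
set T := (k.+2 * up_log 2 n)%N.
rewrite dprobE.
set S := [set X in P0 | nonisolated e P0 X].
set d := coins R (enum S).
have -> : outer_round e w eps TL P0 = dbind d (fun t =>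
  inner_loop e w eps TL [set X : {set 'I_n} | X \in t] n.+1 (P0,
   [set p : {set 'I_n} * {set 'I_n} | [&& p.1 \in [set X in P0 | nonisolated e P0 X & X \notin t],
       p.2 \in [set X : {set 'I_n} | X \in t],
       Hedge e p.1 p.2, TL <= Wt e w p.1 p.2 & (#|p.1| <= #|p.2|)%N]])) by [].
rewrite dE_bind.
apply: (@le_trans _ _ (dE d (fun _ => 1 - n%:R ^- k))).
  by rewrite dE_const (coins_mass R (enum S)) mulr1.
apply: dE_le; first exact: coins_pos.
apply: dall_impl (coins_supp R (enum S)) => t Ht.
set red0 := [set X : {set 'I_n} | X \in t].
set B0 := [set X in P0 | nonisolated e P0 X & X \notin t].
set Ec0 := [set p : {set 'I_n} * {set 'I_n} | _].
have HtS : forall X, X \in t -> X \in P0.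
  by move=> X /Ht; rewrite mem_enum inE => /andP [].
have Hred : red0 \subset P0 by apply/subsetP => X; rewrite inE => /HtS.
have HB : B0 \subset P0 by apply/subsetP => X; rewrite inE => /andP [].
have Htriv : trivIset (red0 :|: B0).
  apply: trivIsetS (partition_trivIset Hpart); by rewrite subUset Hred HB.
have Hdisj : [disjoint red0 & B0].
  rewrite -setI_eq0; apply/eqP/setP => X; rewrite !inE.
  by case: (X \in t); rewrite ?andbF.
have HEc : forall p, p \in Ec0 -> p.1 \in B0 /\ p.2 \in red0.
  by move=> p; rewrite inE => /and5P [-> -> _ _ _].
have HI : Inv B0 Ec0.
  split; first by move=> p /HEc [].
  move=> p q /HEc [Hp _] /HEc [_ Hq]; rewrite disjoint_sym.
  exact: (red_B0_disj Htriv Hdisj Hq Hp).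
have HP0 := card_part_le Hpart.
have Hbl : (#|blues Ec0| <= n)%N.
  apply: leq_trans HP0; apply: subset_leq_card; apply/subsetP => X /imsetP [p Hp ->].
  by have [H1 _] := HEc p Hp; move/subsetP: HB; apply.
have HEc0 : (#|Ec0| <= n ^ 2)%N.
  apply: (@leq_trans #|setX P0 P0|).
    apply: subset_leq_card; apply/subsetP => -[x y] Hp.
    have [H1 H2] := HEc _ Hp; rewrite in_setX.
    by rewrite (subsetP HB _ H1) (subsetP Hred _ H2).
  by rewrite cardsX mulnn leq_exp2r.
rewrite (dE_ext (g := fun o => 1 - failT R T o)); last first.
  apply: dall_T => -[m|]; rewrite /failT /=; last by rewrite subrr.
  by case: (m <= T)%N; rewrite /= ?subr0 ?subrr.
rewrite (_ : dE _ (fun o => 1 - failT R T o) = 1 - dE (inner_loop e w eps TL red0 n.+1 (P0, Ec0)) (failT R T)); last first.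

  by rewrite dE_add dE_opp dE_const (loop_mass e w eps TL red0 n.+1 (P0, Ec0)) mulr1.
rewrite lerD2l lerN2.
have Hnk : 0 <= n%:R ^- k :> R by rewrite invr_ge0 exprn_ge0.
case: (leqP n T) => HT.
  rewrite (dE_ext (g := fun _ => 0)); first by rewrite dE_const mul0r.
  apply: dall_impl (loop_det e w eps TL red0 P0 (leq_trans Hbl (leqnSn n))).
  move=> o [m -> Hm]; rewrite /failT.
  by rewrite (leq_trans Hm (leq_trans Hbl HT)).
apply: le_trans (loop_tail e w TL Heps Htriv Hdisj P0 HI (leq_trans (ltnW HT) (leqnSn n))) _.
have Hn : (0 < n)%N by apply: leq_ltn_trans (leq0n T) HT.
have Hnat : (#|Ec0| * n ^ k <= 2 ^ T)%N.
  apply: (@leq_trans (n ^ 2 * n ^ k)); first by rewrite leq_mul2r HEc0 orbT.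
  rewrite -expnD add2n /T mulnC expnM leq_exp2r //.
  exact: up_logP.
have H2T : (0 : R) < 2 ^+ T by rewrite exprn_gt0.
have Hnk2 : (0 : R) < n%:R ^+ k by rewrite exprn_gt0 // ltr0n.
rewrite ler_pdivrMr // mulrC ler_pdivlMr //.
have -> : (2 : R) ^+ T = (2 ^ T)%:R by rewrite natrX.
by rewrite -natrX -natrM ler_nat.
Qed.
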